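(* Let $\boldsymbol k$ be an algebraically closed field with $\operatorname{char}\boldsymbol k\neq 2$, let $V$ be a vector space over $\boldsymbol k$ of finite dimension $n$, and let $\mathcal M:=V^*\otimes V^*\otimes V$. Then there is a nonempty (dense) open subset $U\subseteq\mathcal M$ such that for every $m\in U$ the $\boldsymbol k$-algebra $\{V,m\}$ is simple and has trivial automorphism group.
   Context: For $m=\sum\ell\otimes\ell'\otimes v\in\mathcal M$, the $\boldsymbol k$-algebra $\{V,m\}$ is the (not necessarily associative) algebra structure on $V$ with product $ab:=\sum\ell(a)\ell'(b)v$. Simple means having no two-sided ideals other than $0$ and $V$. The automorphism group of $\{V,m\}$ is the stabilizer of $m$ in $\mathrm{GL}(V)$ acting naturally on $\mathcal M$. *)

(* Defs.v *)
From HB Require Import structures.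
From mathcomp Require Import all_boot all_order all_algebra.
From mathcomp Require Import mpoly.
Set Implicit Arguments. Unset Strict Implicit. Unset Printing Implicit Defensive.
Import GRing.Theory.
Local Open Scope ring_scope.

(* M = V^* (x) V^* (x) V is identified with k^(n*n*n) via coordinates:
   a point x : 'I_(n*n*n) -> k is the tensor m = sum_{i,j,l} c_{ijl} e_i^* (x) e_j^* (x) e_l
   with c_{ijl} = tcoef x i j l. *)
Definition tcoef (k : Type) (n : nat) (x : 'I_(n * n * n) -> k)
    (i j l : 'I_n) : k :=
  x (mxvec_index (mxvec_index i j) l).

Definition tmul (k : fieldType) (n : nat) (x : 'I_(n * n * n) -> k)
    (a b : 'rV[k]_n) : 'rV[k]_n :=
  \row_l \sum_(i < n) \sum_(j < n) a 0 i * b 0 j * tcoef x i j l.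

Definition is_ideal (k : fieldType) (n : nat) (x : 'I_(n * n * n) -> k)
    (I : 'M[k]_n) : Prop :=
  forall a b : 'rV[k]_n, (a <= I)%MS ->
    (tmul x a b <= I)%MS /\ (tmul x b a <= I)%MS.

Definition simple_alg (k : fieldType) (n : nat) (x : 'I_(n * n * n) -> k) : Prop :=
  forall I : 'M[k]_n, is_ideal x I -> I = 0 \/ row_full I.

Definition is_aut (k : fieldType) (n : nat) (x : 'I_(n * n * n) -> k)
    (g : 'M[k]_n) : Prop :=
  g \in unitmx /\
  forall a b : 'rV[k]_n, tmul x (a *m g) (b *m g) = tmul x a b *m g.

Definition trivial_aut (k : fieldType) (n : nat) (x : 'I_(n * n * n) -> k) : Prop :=
  forall g : 'M[k]_n, is_aut x g -> g = 1%:M.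

Definition zariski_open (k : comRingType) (N : nat) (U : ('I_N -> k) -> Prop) : Prop :=
  exists S : {mpoly k[N]} -> Prop,
    forall x, U x <-> exists p, S p /\ p.@[x] != 0.

(* Main.v *)
Require Import Defs.
From HB Require Import structures.
From mathcomp Require Import all_boot all_order all_algebra.
From mathcomp Require Import mpoly.
From mathcomp Require Import zify.
Set Implicit Arguments. Unset Strict Implicit. Unset Printing Implicit Defensive.
Import GRing.Theory.
Local Open Scope ring_scope.

Section Gen.
Variables (R : comNzRingType) (m : nat).
Local Notation n := m.+1.
Implicit Type y : 'I_(n * n * n) -> R.

Definition Lb y (i : 'I_n) : 'M[R]_n := \matrix_(j, l) tcoef y i j l.
Definition Lm y (a : 'rV[R]_n) : 'M[R]_n := \sum_i a 0 i *: Lb y i.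
Definition tv y : 'cV[R]_n := \col_i \tr (Lb y i).
Definition Bm y : 'M[R]_n := \matrix_(i, k) \tr (Lb y i *m Lb y k).
Definition uu y : 'rV[R]_n := (tv y)^T *m \adj (Bm y).
Definition Kmat y : 'M[R]_n :=
  \matrix_(k < n) (uu y *m (Lm y (uu y) - 1%:M) ^+ k).
Definition Wd y (i j : 'I_n) : 'M[R]_n :=
  Lb y ord_max ^+ (m - i) *m Lb y ord0 ^+ m *m Lb y ord_max ^+ j.
Definition Zm y : 'M[R]_(n * n) :=
  \sum_i \sum_j (mxvec (Wd y i j))^T *m mxvec (Wd y i j).
Definition F1 y := \det (Bm y) * \det (Kmat y).
Definition F2 y := \det (Zm y).
End Gen.

Section Map.
Variables (R S : comNzRingType) (f : {rmorphism R -> S}) (m : nat).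
Local Notation n := m.+1.
Implicit Type y : 'I_(n * n * n) -> R.

Lemma map_Lb y i : (map_mx f (Lb y i)) = Lb (f \o y) i.
Proof. by apply/matrixP=> j l; rewrite !mxE. Qed.

Lemma map_tr (A : 'M[R]_n) : f (\tr A) = \tr (map_mx f A).
Proof. by rewrite /mxtrace rmorph_sum; apply: eq_bigr => i _; rewrite mxE. Qed.

Lemma map_Lm y a : (map_mx f (Lm y a)) = Lm (f \o y) (map_mx f a).
Proof.
apply/matrixP=> j l; rewrite !mxE /Lm !summxE rmorph_sum; apply: eq_bigr => i _.
by rewrite !mxE rmorphM /=.
Qed.

Lemma map_tv y : (map_mx f (tv y)) = tv (f \o y).
Proof. by apply/matrixP=> i j; rewrite !mxE map_tr map_Lb. Qed.

Lemma map_Bm y : (map_mx f (Bm y)) = Bm (f \o y).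
Proof. by apply/matrixP=> i j; rewrite !mxE map_tr map_mxM !map_Lb. Qed.

Lemma map_uu y : (map_mx f (uu y)) = uu (f \o y).
Proof. by rewrite /uu map_mxM -map_trmx map_tv map_mx_adj map_Bm. Qed.

Lemma map_Kmat y : (map_mx f (Kmat y)) = Kmat (f \o y).
Proof.
apply/row_matrixP=> k; rewrite -map_row !rowK map_mxM rmorphXn /= map_mxB map_mx1.
by rewrite map_Lm map_uu.
Qed.

Lemma map_Wd y i j : (map_mx f (Wd y i j)) = Wd (f \o y) i j.
Proof. by rewrite /Wd !map_mxM !rmorphXn /= !map_Lb. Qed.

Lemma map_Zm y : (map_mx f (Zm y)) = Zm (f \o y).
Proof.
apply/matrixP=> r s; rewrite /Zm mxE !summxE rmorph_sum; apply: eq_bigr => i _.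
rewrite !summxE rmorph_sum; apply: eq_bigr => j _.
by rewrite -[in RHS]map_Wd -map_mxvec map_trmx -map_mxM; rewrite [RHS]mxE.
Qed.

Lemma map_F1 y : f (F1 y) = F1 (f \o y).
Proof. by rewrite /F1 rmorphM /= -!det_map_mx map_Bm map_Kmat. Qed.

Lemma map_F2 y : f (F2 y) = F2 (f \o y).
Proof. by rewrite /F2 -det_map_mx map_Zm. Qed.
End Map.

Section Aut.
Variables (K : fieldType) (m : nat).
Local Notation n := m.+1.
Variable x : 'I_(n * n * n) -> K.

Lemma tmulE a b : tmul x a b = b *m Lm x a.
Proof.
apply/rowP=> l; rewrite !mxE exchange_big /=; apply: eq_bigr => j _.
rewrite /Lm summxE mulr_sumr; apply: eq_bigr => i _.
by rewrite !mxE mulrCA mulrA.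
Qed.

Lemma mx_ext_rV p (M N : 'M[K]_(n, p)) :
  (forall a : 'rV[K]_n, a *m M = a *m N) -> M = N.
Proof. by move=> H; apply/row_matrixP=> i; rewrite !rowE H. Qed.

Lemma mx_ext_form (M N : 'M[K]_n) :
  (forall a b : 'rV[K]_n, (a *m M *m b^T) 0 0 = (a *m N *m b^T) 0 0) -> M = N.
Proof.
move=> H; apply/matrixP=> i k; have := H (delta_mx 0 i) (delta_mx 0 k).
by rewrite trmx_delta -!rowE -!colE !mxE.
Qed.

Lemma tr_Lm a : \tr (Lm x a) = (a *m tv x) 0 0.
Proof.
rewrite /Lm raddf_sum /= mxE; apply: eq_bigr => i _.
by rewrite mxtraceZ !mxE.
Qed.

Lemma tr_LmLm a b : \tr (Lm x a *m Lm x b) = (a *m Bm x *m b^T) 0 0.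
Proof.
rewrite /Lm mulmx_suml; under eq_bigr do rewrite mulmx_sumr.
rewrite raddf_sum /=; under eq_bigr do rewrite raddf_sum /=.
rewrite mxE; under [RHS]eq_bigr do rewrite !mxE mulr_suml.
rewrite exchange_big /=; apply: eq_bigr => i _; apply: eq_bigr => k _.
rewrite -scalemxAl -scalemxAr !mxtraceZ !mxE.
by rewrite -mulrA [_ * b 0 i]mulrC.
Qed.

Variable g : 'M[K]_n.
Hypothesis ag : is_aut x g.

Lemma g_unit : g \in unitmx. Proof. by case: ag. Qed.

Lemma aut_Lm a : Lm x (a *m g) = invmx g *m Lm x a *m g.
Proof.
case: ag => ug H; rewrite -mulmxA; apply: (canRL (mulKmx ug)).
apply: mx_ext_rV => b; have := H a b; rewrite !tmulE !mulmxA => -> //.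
Qed.

Lemma tr_inv (A : 'M[K]_n) : \tr (invmx g *m A *m g) = \tr A.
Proof. by rewrite mxtrace_mulC mulKVmx ?g_unit. Qed.

Lemma tv_inv : g *m tv x = tv x.
Proof.
apply: mx_ext_rV => a; apply/matrixP=> i j; rewrite !ord1.
by rewrite mulmxA -tr_Lm aut_Lm tr_inv tr_Lm.
Qed.

Lemma Bm_inv : g *m Bm x *m g^T = Bm x.
Proof.
apply: mx_ext_form => a b.
rewrite !mulmxA -(mulmxA _ g^T) -trmx_mul -tr_LmLm -tr_LmLm !aut_Lm.
rewrite -!mulmxA mulKVmx ?g_unit // (mulmxA (Lm x a)) mulmxA.
by rewrite tr_inv.
Qed.

Hypothesis detB : \det (Bm x) != 0.

Lemma uu_inv : uu x *m g = uu x.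
Proof.
have uB : Bm x \in unitmx by rewrite unitmxE unitfE.
have ug := g_unit.
have e1 : (tv x)^T *m g^T = (tv x)^T by rewrite -trmx_mul tv_inv.
have e2 : Bm x *m g^T = invmx g *m Bm x.
  by rewrite -{2}Bm_inv -!mulmxA mulKmx.
have e3 : g^T *m \adj (Bm x) *m g = \adj (Bm x).
  apply: (can_inj (mulKmx uB)); rewrite /= !mulmxA e2 -!mulmxA.
  by rewrite (mulmxA (Bm x)) mul_mx_adj -scalar_mxC mulKmx.
by rewrite /uu -{1}e1 -!mulmxA (mulmxA g^T) e3.
Qed.

Hypothesis detK : \det (Kmat x) != 0.

Lemma g_one : g = 1%:M.
Proof.
have uK : Kmat x \in unitmx by rewrite unitmxE unitfE.
have ug := g_unit.
set N := Lm x (uu x) - 1%:M.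
have cN : g *m N = N *m g.
  rewrite /N mulmxBl mulmxBr mul1mx mulmx1; congr (_ - _).
  by rewrite -{1}uu_inv aut_Lm mulmxA mulKVmx.
have cNk k : g *m N ^+ k = N ^+ k *m g.
  elim: k => [|k IH]; first by rewrite !expr0 mul1mx mulmx1.
  by rewrite exprSr -[_ * N]/(_ *m N) mulmxA IH -mulmxA -cN mulmxA.
have KK : Kmat x *m g = Kmat x.
  apply/row_matrixP=> k; rewrite row_mul !rowK -mulmxA -cNk mulmxA.
  by rewrite uu_inv.
by rewrite -[g]mul1mx -(mulVmx uK) -mulmxA KK.
Qed.
End Aut.

Section Simple.
Variables (K : fieldType) (m : nat).
Local Notation n := m.+1.
Variable x : 'I_(n * n * n) -> K.

Lemma Lm_delta i : Lm x (delta_mx 0 i) = Lb x i.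
Proof.
rewrite /Lm (bigD1 i) //= mxE !eqxx scale1r big1 ?addr0 // => j ne.
by rewrite mxE eqxx (negbTE ne) scale0r.
Qed.

Variable I : 'M[K]_n.
Hypothesis idI : is_ideal x I.

Lemma id_Lb (v : 'rV[K]_n) i : (v <= I)%MS -> (v *m Lb x i <= I)%MS.
Proof. by move=> vI; have [_ +] := idI (delta_mx 0 i) vI; rewrite tmulE Lm_delta. Qed.

Lemma id_Lbk (v : 'rV[K]_n) i k : (v <= I)%MS -> (v *m Lb x i ^+ k <= I)%MS.
Proof.
elim: k v => [|k IH] v vI; first by rewrite expr0 mulmx1.
by rewrite exprS -[_ * _]/(_ *m _) mulmxA IH // id_Lb.
Qed.

Lemma id_Wd (v : 'rV[K]_n) i j : (v <= I)%MS -> (v *m Wd x i j <= I)%MS.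
Proof. by move=> vI; rewrite /Wd !mulmxA !id_Lbk. Qed.

Hypothesis detZ : \det (Zm x) != 0.

Lemma id_all (v : 'rV[K]_n) (A : 'M[K]_n) : (v <= I)%MS -> (v *m A <= I)%MS.
Proof.
move=> vI.
have uZ : Zm x \in unitmx by rewrite unitmxE unitfE.
pose c i j := (mxvec A *m invmx (Zm x) *m (mxvec (Wd x i j))^T) 0 0.
have eA : A = \sum_i \sum_j c i j *: Wd x i j.
  apply: (can_inj (@mxvecK _ n n)).
  rewrite -[mxvec A](mulmxKV uZ) /Zm mulmx_sumr raddf_sum /=.
  apply: eq_bigr => i _; rewrite mulmx_sumr raddf_sum /=.
  apply: eq_bigr => j _; rewrite linearZ /= mulmxA [_ *m _^T]mx11_scalar.
  by rewrite mul_scalar_mx.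
rewrite eA mulmx_sumr summx_sub // => i _; rewrite mulmx_sumr summx_sub // => j _.
by rewrite -scalemxAr scalemx_sub // id_Wd.
Qed.

Lemma full_of_nz (v : 'rV[K]_n) : (v <= I)%MS -> v != 0 -> row_full I.
Proof.
move=> vI nz.
case: (pickP (fun c => v 0 c != 0)) => [c vc | all0]; last first.
  case/eqP: nz; apply/rowP => c; move: (all0 c) => /negbFE/eqP ->.
  by rewrite mxE.
rewrite -sub1mx; apply/row_subP => l; rewrite row1.
have -> : delta_mx 0 l = v *m ((v 0 c)^-1 *: delta_mx c l).
  apply/rowP => l'; rewrite -scalemxAr !mxE (bigD1 c) //= !mxE eqxx /=.
  rewrite big1 ?addr0; last by move=> j ne; rewrite mxE (negbTE ne) andFb mulr0.
  by rewrite mulKf.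
exact: id_all.
Qed.

Lemma simple_of_detZ : I = 0 \/ row_full I.
Proof.
case: (pickP (fun r => row r I != 0)) => [r nz | all0]; last first.
  left; apply/row_matrixP => r; move: (all0 r) => /negbFE/eqP ->.
  by rewrite row0.
by right; apply: (full_of_nz (row_sub r I) nz).
Qed.
End Simple.

Section Witness.
Variables (K : fieldType) (m : nat).
Local Notation n := m.+1.

Definition pt (Lw : 'I_n -> 'M[K]_n) : 'I_(n * n * n) -> K :=
  fun r => mxvec (\matrix_(p, l) mxvec (\matrix_(i, j) Lw i j l) 0 p) 0 r.

Lemma Lb_pt Lw i : Lb (pt Lw) i = Lw i.
Proof. by apply/matrixP=> j l; rewrite mxE /tcoef /pt !mxvecE !mxE mxvecE mxE. Qed.

Lemma sum_eq (q : nat) (F : nat -> K) :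
  \sum_(p < n) ((p : nat) == q)%:R * F p = (q < n)%:R * F q.
Proof.
case: (ltnP q n) => h.
  rewrite (bigD1 (Ordinal h)) //= eqxx mul1r big1 ?addr0 // => p ne.
  suff -> : ((p : nat) == q) = false by rewrite mul0r.
  by apply/negbTE; apply: contra ne => /eqP e; apply/eqP/val_inj.
rewrite big1 ?mul0r // => p _.
suff -> : ((p : nat) == q) = false by rewrite mul0r.
by apply/negbTE; rewrite neq_ltn (leq_trans (ltn_ord p) h).
Qed.

Lemma sum_eq' (q : nat) (F : nat -> K) :
  \sum_(p < n) F p * ((p : nat) == q)%:R = (q < n)%:R * F q.
Proof. by rewrite -sum_eq; apply: eq_bigr => p _; rewrite mulrC. Qed.

Definition Sh : 'M[K]_n := \matrix_(j, l) ((l : nat) == j.+1)%:R.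
Definition Dh : 'M[K]_n := \matrix_(j, l) ((j : nat) == l.+1)%:R.

Lemma tr_delta_mul i (A : 'M[K]_n) : \tr (delta_mx i i *m A) = A i i.
Proof.
rewrite /mxtrace (bigD1 i) //= big1 ?addr0.
  rewrite mxE (bigD1 i) //= mxE !eqxx mul1r big1 ?addr0 // => j ne.
  by rewrite mxE (negbTE ne) andbF mul0r.
move=> j ne; rewrite mxE big1 // => k _; rewrite mxE (negbTE ne) mul0r.
by [].
Qed.

Lemma Sh_diag i : Sh i i = 0.
Proof. by rewrite mxE eqn_leq ltnn andbF. Qed.

Lemma tr_Sh : \tr Sh = 0.
Proof. by rewrite /mxtrace big1 // => i _; rewrite Sh_diag. Qed.

Lemma tr_ShSh : \tr (Sh *m Sh) = 0.
Proof.
rewrite /mxtrace big1 // => i _; rewrite mxE big1 // => j _; rewrite !mxE.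
case: eqP => [e1|]; last by rewrite mul0r.
case: eqP => [e2|]; last by rewrite mulr0.
by move: e1; rewrite e2 => /eqP; rewrite -[X in X == _]addn0 -[j.+2]addn2 eqn_add2l.
Qed.

Definition Lw1 (i : 'I_n) : 'M[K]_n := delta_mx i i + (i == ord0)%:R *: Sh.

Lemma tv1 : tv (pt Lw1) = const_mx 1.
Proof.
apply/matrixP=> i j; rewrite !mxE Lb_pt /Lw1 mxtraceD mxtraceZ tr_Sh mulr0 addr0.
by rewrite -[delta_mx i i]mulmx1 tr_delta_mul mxE eqxx.
Qed.

Lemma Bm1 : Bm (pt Lw1) = 1%:M.
Proof.
apply/matrixP=> i k; rewrite !mxE !Lb_pt /Lw1 mulmxDl !mulmxDr !mxtraceD.
rewrite -!scalemxAl -!scalemxAr !mxtraceZ tr_ShSh.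
rewrite (mxtrace_mulC Sh) !tr_delta_mul !Sh_diag !mulr0 !addr0 mxE.
by rewrite eq_sym andbb.
Qed.

Lemma uu1 : uu (pt Lw1) = const_mx 1.
Proof. by rewrite /uu Bm1 adj1 mulmx1 tv1 trmx_const. Qed.

Lemma Lm1 : Lm (pt Lw1) (const_mx 1) - 1%:M = Sh.
Proof.
rewrite /Lm; under eq_bigr do rewrite mxE scale1r Lb_pt /Lw1.
rewrite big_split /= -mx1_sum_delta addrC addrK.
rewrite (bigD1 ord0) //= scale1r big1 ?addr0 // => i ne.
by rewrite (negbTE ne) scale0r.
Qed.

Lemma ones_Sh k : (const_mx 1 : 'rV[K]_n) *m Sh ^+ k = \row_l (k <= l)%:R.
Proof.
elim: k => [|k IH].
  by rewrite expr0 mulmx1; apply/rowP => l; rewrite !mxE.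
rewrite exprSr -[_ * Sh]/(_ *m Sh) mulmxA IH; apply/rowP => l.
rewrite !mxE; under eq_bigr do rewrite !mxE.
case: l => [[|l] hl] /=.
  by rewrite big1 // => p _; rewrite mulr0.
rewrite (bigD1 (Ordinal (ltnW hl))) //= eqxx mulr1 big1 ?addr0 // => p ne.
case: eqP => [e|]; last by rewrite mulr0.
by case/eqP: ne; apply/val_inj; case: e.
Qed.

Lemma Kmat1E k l : Kmat (pt Lw1) k l = (k <= l)%:R.
Proof.
transitivity (row k (Kmat (pt Lw1)) 0 l); first by rewrite [RHS]mxE.
by rewrite rowK uu1 Lm1 ones_Sh mxE.
Qed.

Lemma Kmat1 : \det (Kmat (pt Lw1)) = 1.
Proof.
rewrite -det_tr det_trig.
  by rewrite big1 // => i _; rewrite mxE Kmat1E leqnn.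
apply/is_trig_mxP=> i j lt.
by rewrite mxE Kmat1E leqNgt lt.
Qed.

Lemma F1_wit : F1 (pt Lw1) = 1.
Proof. by rewrite /F1 Bm1 det1 Kmat1 mulr1. Qed.
End Witness.

Section Witness2.
Variables (K : fieldType) (m : nat).
Local Notation n := m.+1.

Lemma Sh_pow a : (Sh K m) ^+ a = \matrix_(j, l) ((l : nat) == (j + a)%N)%:R.
Proof.
elim: a => [|a IH].
  by apply/matrixP=> j l; rewrite expr0 !mxE addn0 eq_sym.
rewrite exprSr -[_ * _]/(_ *m _) IH; apply/matrixP=> j l; rewrite !mxE.
under eq_bigr do rewrite !mxE.
rewrite (@sum_eq K m (j + a)%N (fun p => ((l : nat) == p.+1)%:R)) addnS.
case: eqP => [e|]; last by rewrite mulr0.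
by rewrite -e (ltnW (ltn_ord l)) mul1r.
Qed.

Lemma Dh_pow a : (Dh K m) ^+ a = \matrix_(j, l) ((j : nat) == (l + a)%N)%:R.
Proof.
elim: a => [|a IH].
  by apply/matrixP=> j l; rewrite expr0 !mxE addn0.
rewrite exprSr -[_ * _]/(_ *m _) IH; apply/matrixP=> j l; rewrite !mxE.
under eq_bigr do rewrite !mxE.
rewrite (@sum_eq' K m l.+1 (fun p => ((j : nat) == (p + a)%N)%:R)) addnS addSn.
case: eqP => [e|]; last by rewrite mulr0.
have -> : (l.+1 < n)%N by rewrite (@leq_ltn_trans j) // e ltnS leq_addr.
by rewrite mul1r.
Qed.
End Witness2.

Section Witness3.
Variables (K : fieldType) (m : nat).
Local Notation n := m.+1.
Local Notation Sh := (Sh K m).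
Local Notation Dh := (Dh K m).

Lemma mul_mx_deltaE (A : 'M[K]_n) (p q r c : 'I_n) :
  (A *m delta_mx p q) r c = A r p * (c == q)%:R.
Proof.
rewrite mxE (bigD1 p) //= mxE eqxx /= big1 ?addr0 // => j ne.
by rewrite mxE (negbTE ne) mulr0.
Qed.

Lemma mul_delta_mxE (A : 'M[K]_n) (p q r c : 'I_n) :
  (delta_mx p q *m A) r c = (r == p)%:R * A q c.
Proof.
rewrite mxE (bigD1 q) //= mxE eqxx andbT big1 ?addr0 // => j ne.
by rewrite mxE (negbTE ne) andbF mul0r.
Qed.

Lemma Dh_m : Dh ^+ m = delta_mx ord_max ord0.
Proof.
apply/matrixP=> r q; rewrite Dh_pow !mxE; congr (_%:R).
have := ltn_ord r; have := ltn_ord q.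
case: r q => [r hr] [q hq] /= *; rewrite -!val_eqE /=.
case: (q =P 0%N) => [->|qn]; rewrite ?andbT ?andbF ?add0n //.
apply/eqP; lia.
Qed.

Lemma Sh_delta (i : 'I_n) : Sh ^+ (m - i) *m (delta_mx ord_max ord0 : 'M[K]_n) = delta_mx i ord0.
Proof.
apply/matrixP=> r c; rewrite mul_mx_deltaE Sh_pow !mxE.
have := ltn_ord r; have := ltn_ord i.
case: r i => [r hr] [i hi] /= *.
rewrite -[Ordinal hr == _]val_eqE /=.
have -> : (m == r + (m - i))%N = (r == i)%N by apply/eqP/eqP; lia.
by case: (r == i); case: (c == ord0); rewrite ?mul1r ?mul0r.
Qed.

Lemma delta_Sh (i j : 'I_n) : (delta_mx i ord0 : 'M[K]_n) *m Sh ^+ j = delta_mx i j.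
Proof.
apply/matrixP=> r c; rewrite mul_delta_mxE Sh_pow !mxE /= add0n.
by case: (r == i); rewrite ?mul1r ?mul0r.
Qed.

Definition Lw2 (i : 'I_n) : 'M[K]_n := if i == ord0 then Dh else Sh.

Lemma Lb2_max : Lb (pt Lw2) ord_max = Sh.
Proof.
rewrite Lb_pt /Lw2; case: eqP => // e.
apply/matrixP=> j l; rewrite !mxE; congr (_%:R).
have m0 : m = 0%N by move/(congr1 val): e.
have := ltn_ord j; have := ltn_ord l.
by case: j l => [j hj] [l hl] /= *; apply/eqP/eqP; lia.
Qed.

Lemma Wd2 i j : Wd (pt Lw2) i j = delta_mx i j.
Proof.
by rewrite /Wd Lb2_max Lb_pt /Lw2 eqxx Dh_m Sh_delta delta_Sh.
Qed.

Lemma mvi_inj (i j i' j' : 'I_n) :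
  mxvec_index i j = mxvec_index i' j' -> i = i' /\ j = j'.
Proof.
move=> e; have := mxvecE (delta_mx i j : 'M[K]_n) i' j'.
rewrite -e mxvecE !mxE !eqxx /=.
case: (i' =P i) => [->|_]; case: (j' =P j) => [->|_] //=;
  by rewrite ?andbF => /eqP; rewrite oner_eq0.
Qed.

Lemma Zm2 : Zm (pt Lw2) = 1%:M.
Proof.
apply/matrixP=> r s; rewrite /Zm summxE.
under eq_bigr do rewrite summxE.
under eq_bigr do under eq_bigr do rewrite Wd2 mxvec_delta trmx_delta mul_delta_mx.
case/mxvec_indexP: r => i0 j0.
rewrite (bigD1 i0) //= (bigD1 j0) //= big1 ?addr0; last first.
  move=> j ne; rewrite !mxE; case: eqP => [/mvi_inj [_ e]|]; last by [].
  by rewrite e eqxx in ne.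
rewrite big1 ?addr0; last first.
  move=> i ne; rewrite big1 // => j _; rewrite !mxE; case: eqP => [/mvi_inj [e _]|] //.
  by rewrite e eqxx in ne.
by rewrite !mxE eqxx /= eq_sym.
Qed.

Lemma F2_wit : F2 (pt Lw2) = 1.
Proof. by rewrite /F2 Zm2 det1. Qed.
End Witness3.

From Stdlib Require Import FunctionalExtensionality.

Lemma good_x (k : fieldType) (m : nat) (x : 'I_(m.+1 * m.+1 * m.+1) -> k) :
  F1 x * F2 x != 0 -> simple_alg x /\ trivial_aut x.
Proof.
rewrite mulf_eq0 negb_or => /andP[h1 h2].
move: h1; rewrite /F1 mulf_eq0 negb_or => /andP[hB hK].
split.
  by move=> I idI; exact: (simple_of_detZ idI h2).
by move=> g ag; apply: (g_one ag hB hK).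
Qed.

Theorem theorem4 (k : closedFieldType) (n : nat) :
  (2 \notin [pchar k])%N ->
  exists U : ('I_(n * n * n) -> k) -> Prop,
    zariski_open U /\ (exists x, U x) /\
    forall x, U x -> simple_alg x /\ trivial_aut x.
Proof.
move=> _; case: n => [|m].
  exists (fun x => exists p, p = 1 /\ p.@[x] != 0); split.
    by exists (fun p => p = 1).
  split.
    by exists (fun _ => 0); exists 1; rewrite meval1 oner_neq0.
  move=> x _; split.
    by move=> I _; left; apply/matrixP => [[]].
  by move=> g _; apply/matrixP => [[]].
pose P : {mpoly k[m.+1 * m.+1 * m.+1]} :=
  F1 (fun i => 'X_i) * F2 (fun i => 'X_i).
have PE x : P.@[x] = F1 x * F2 x.
  rewrite /P rmorphM /= map_F1 map_F2.
  have -> : (meval x \o (fun i => 'X_i)) = x.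
    by apply: functional_extensionality => i; rewrite /= mevalXU.
  by [].
exists (fun x => exists p, p = P /\ p.@[x] != 0); split.
  by exists (fun p => p = P).
split; last first.
  by move=> x [p [-> hp]]; apply: good_x; rewrite -PE.
pose y : 'I_(m.+1 * m.+1 * m.+1) -> {poly k} :=
  fun r => (pt (@Lw1 k m) r)%:P + (pt (@Lw2 k m) r - pt (@Lw1 k m) r)%:P * 'X.
have yE t : (fun r => horner_eval t (y r)) =
    (fun r => pt (@Lw1 k m) r + (pt (@Lw2 k m) r - pt (@Lw1 k m) r) * t).
  by apply: functional_extensionality => r; rewrite horner_evalE /y !hornerE.
have q1E t : (F1 y).[t] = F1 (fun r => pt (@Lw1 k m) r + (pt (@Lw2 k m) r - pt (@Lw1 k m) r) * t).
  by rewrite -horner_evalE map_F1 -yE.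
have q2E t : (F2 y).[t] = F2 (fun r => pt (@Lw1 k m) r + (pt (@Lw2 k m) r - pt (@Lw1 k m) r) * t).
  by rewrite -horner_evalE map_F2 -yE.
have nq1 : F1 y != 0.
  apply/negP => /eqP e; have := q1E 0; rewrite e horner0.
  have -> : (fun r => pt (@Lw1 k m) r + (pt (@Lw2 k m) r - pt (@Lw1 k m) r) * 0) = pt (@Lw1 k m).
    by apply: functional_extensionality => r; rewrite mulr0 addr0.
  by rewrite F1_wit => /eqP; rewrite eq_sym oner_eq0.
have nq2 : F2 y != 0.
  apply/negP => /eqP e; have := q2E 1; rewrite e horner0.
  have -> : (fun r => pt (@Lw1 k m) r + (pt (@Lw2 k m) r - pt (@Lw1 k m) r) * 1) = pt (@Lw2 k m).
    by apply: functional_extensionality => r; rewrite mulr1 addrC subrK.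
  by rewrite F2_wit => /eqP; rewrite eq_sym oner_eq0.
have [t nt] := closed_nonrootP (F1 y * F2 y) (mulf_neq0 nq1 nq2).
exists (fun r => pt (@Lw1 k m) r + (pt (@Lw2 k m) r - pt (@Lw1 k m) r) * t).
exists P; split => //; rewrite PE -q1E -q2E -hornerM.
by move: nt; rewrite /root.
Qed.
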